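(* Let nonempty active action sets $A_{l,i}\subseteq\mathcal{A}$ be given for all $(l,i)\in[k]\times[H]$, and let $\eta$ be the random exploration policy in which, independently for each state $(l,i)$, the action $e_{l,i}$ is drawn uniformly at random from $A_{l,i}$. Let $Q_{l,i}$ be the probability that $\eta$ visits state $(l,i)$ (over the random actions and the random transitions). Then for any $i\in[H-1]$ and $l,s\in[k]$, $$Q_{s,i+1}\ \ge\ \max_{a\in A_{l,i}}\frac{Q_{l,i}}{A}\,p_i(s\mid l,a).$$
   Context: An episodic MDP has states $(l,i)$, $l\in[k]$, $i\in[H]$, start state $(1,1)$, and an action set $\mathcal{A}$ of size $A$. For $i\in[H-1]$, action $a$ at state $(l,i)$ moves to state $(s,i+1)$ with probability $p_i(s\mid l,a)$, independently of everything else. A (possibly randomized) policy that fixes an action at every state is executed from $(1,1)$ by taking the assigned action at each visited state. *)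

(* Defs.v *)
From mathcomp Require Import all_boot all_order all_algebra.
Set Implicit Arguments. Unset Strict Implicit. Unset Printing Implicit Defensive.
Import Order.TTheory GRing.Theory Num.Theory.
Local Open Scope ring_scope.

(* States are (l, i) with l : 'I_k (level l+1) and i : 'I_H (step i+1).
   The start state (1,1) is (value 0, step 0).
   p i l a s = p_{i+1}(s+1 | l+1, a), used only for i.+1 < H. *)
Section MDP.
Variables (R : realFieldType) (k H : nat) (Act : finType).
Variable p : nat -> 'I_k -> Act -> 'I_k -> R.

Definition policy := {ffun 'I_k * 'I_H -> Act}.
Definition traj := {ffun 'I_H -> 'I_k}.

Definition traj_prob (e : policy) (x : traj) : R :=
  (\prod_(j : 'I_H | val j == 0%N) (val (x j) == 0%N)%:R) *
  \prod_(j : 'I_H) \prod_(j' : 'I_H | val j' == j.+1)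
      p j (x j) (e (x j, j)) (x j').

Definition eta_prob (Aset : 'I_k -> 'I_H -> {set Act}) (e : policy) : R :=
  \prod_(st : 'I_k * 'I_H)
     ((e st \in Aset st.1 st.2)%:R / #|Aset st.1 st.2|%:R).

Definition visit_prob (Aset : 'I_k -> 'I_H -> {set Act}) (l : 'I_k) (i : 'I_H) : R :=
  \sum_(e : policy) eta_prob Aset e * \sum_(x : traj | x i == l) traj_prob e x.
End MDP.

(* Main.v *)
Require Import Defs.
From mathcomp Require Import all_boot all_order all_algebra zify.
Import Order.TTheory GRing.Theory Num.Theory.
Local Open Scope ring_scope.
Set Implicit Arguments. Unset Strict Implicit.

Section Aux.
Variables (R : realFieldType) (k H : nat) (Act : finType).
Variable p : nat -> 'I_k -> Act -> 'I_k -> R.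
Hypothesis p_ge0 : forall i l a s, 0 <= p i l a s.
Hypothesis p_sum1 : forall i l a, \sum_(s : 'I_k) p i l a s = 1.

Definition T (e : policy k H Act) (j : 'I_H) (x : traj k H) : R :=
  \prod_(j' : 'I_H | val j' == j.+1) p j (x j) (e (x j, j)) (x j').
Definition agree (m : nat) (x y : traj k H) :=
  [forall j : 'I_H, (val j < m)%N ==> (x j == y j)].
Definition Post e m x := \prod_(j : 'I_H | (m <= j.+1)%N) T e j x.
Definition updt (y : traj k H) (j0 : 'I_H) v : traj k H :=
  [ffun j => if j == j0 then v else y j].

Lemma agreeP m (x y : traj k H) : reflect (forall j : 'I_H, (val j < m)%N -> x j = y j) (agree m x y).
Proof.
apply: (iffP forallP) => h j.
  by move=> hj; apply/eqP; exact: (implyP (h j) hj).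
by apply/implyP => hj; apply/eqP; exact: h.
Qed.

Lemma agree_sym m (x y : traj k H) : agree m x y = agree m y x.
Proof. by apply/agreeP/agreeP => h j hj; rewrite h. Qed.

Lemma agree_upd m (x y : traj k H) (jm : 'I_H) v : val jm = m ->
  agree m x y && (x jm == v) = agree m.+1 x (updt y jm v).
Proof.
move=> hjm; apply/andP/agreeP.
  case=> /agreeP h /eqP hv j hj; rewrite ffunE.
  case: eqP => [->//|hne]; apply: h.
  have : val j != m by apply/eqP => e; apply: hne; apply: val_inj; rewrite /= e hjm.
  lia.
move=> h; split.
  apply/agreeP => j hj; rewrite h; last lia.
  rewrite ffunE; case: eqP => // ej; rewrite ej in hj; lia.
by rewrite h ?ffunE ?eqxx // hjm.
Qed.

Lemma post_split e m (j0 : 'I_H) (x : traj k H) : val j0 = m.-1 -> (0 < m)%N ->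
  Post e m x = T e j0 x * Post e m.+1 x.
Proof.
move=> hj0 hm; rewrite /Post (bigD1 j0) /=; last by rewrite hj0; lia.
congr (_ * _); apply: eq_bigl => j.
rewrite -(inj_eq val_inj) hj0 /=.
apply/idP/idP => [/andP [h1 h2]|h]; first by move: h2 => /eqP h2; lia.
apply/andP; split; [lia|apply/eqP; lia].
Qed.

Lemma T_val e (j0 j1 : 'I_H) (x : traj k H) : val j1 = (val j0).+1 ->
  T e j0 x = p j0 (x j0) (e (x j0, j0)) (x j1).
Proof.
move=> h1; rewrite /T (big_pred1 j1) // => j.
by rewrite /= -h1; apply/eqP/eqP => [ej|->//]; apply: val_inj.
Qed.

Lemma marg e n : forall m (y : traj k H), (m + n = H)%N -> (0 < m)%N ->
  \sum_(x | agree m x y) Post e m x = 1.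
Proof.
elim: n => [|n IH] m y hmn hm.
  rewrite addn0 in hmn.
  rewrite (big_pred1 y); last first.
    move=> x; apply/agreeP/eqP => [h|-> //]; apply/ffunP => j; apply: h; apply: leq_trans (ltn_ord j) _; by rewrite hmn.
  rewrite /Post; apply: big1 => j hj; apply: big1 => j' /eqP hj'.
  move: hj' => /= hj'; have := ltn_ord j'; lia.
have hmH : (m < H)%N by lia.
have hm1H : (m.-1 < H)%N by lia.
set jm : 'I_H := Ordinal hmH.
set jm1 : 'I_H := Ordinal hm1H.
transitivity (\sum_(x | agree m x y)
   p m.-1 (y jm1) (e (y jm1, jm1)) (x jm) * Post e m.+1 x).
  apply: eq_bigr => x /agreeP hx.
  rewrite (post_split e x (j0 := jm1)) //= (T_val e x (j1 := jm)) /=; last lia.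
  by rewrite hx //=; lia.
rewrite (partition_big (fun x : traj k H => x jm) predT) //=.
rewrite -[RHS](p_sum1 m.-1 (y jm1) (e (y jm1, jm1))).
apply: eq_bigr => v _.
transitivity (\sum_(x | agree m.+1 x (updt y jm v))
   p m.-1 (y jm1) (e (y jm1, jm1)) v * Post e m.+1 x).
  apply: eq_big => x; first by rewrite agree_upd.
  by case/andP => _ /eqP ->.
by rewrite -big_distrr /= IH ?mulr1 //; lia.
Qed.


Definition Pre e (i : nat) (x : traj k H) :=
  (\prod_(j : 'I_H | val j == 0%N) (val (x j) == 0%N)%:R) *
  \prod_(j : 'I_H | (j < i)%N) T e j x.

Lemma traj_split e (i : nat) x : traj_prob p e x = Pre e i x * Post e i.+1 x.
Proof.
rewrite /traj_prob /Pre -mulrA; congr (_ * _).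
rewrite (bigID (fun j : 'I_H => (j < i)%N)) /=; congr (_ * _).
by rewrite /Post; apply: eq_big => j; rewrite ?ltnS -?leqNgt.
Qed.

Lemma Pre_agree (e e' : policy k H Act) (i : nat) (x x' : traj k H)
  (he : forall l (j : 'I_H), (j < i)%N -> e (l, j) = e' (l, j)) :
  agree i.+1 x x' -> Pre e i x = Pre e' i x'.
Proof.
move/agreeP => hx; rewrite /Pre; congr (_ * _).
  by apply: eq_bigr => j /eqP hj; rewrite hx //= hj.
apply: eq_bigr => j hj.
have hxj : x j = x' j by apply: hx => /=; lia.
rewrite /T hxj he //; apply: eq_bigr => j' /eqP hj'.
by rewrite hx // hj'; lia.
Qed.

Lemma marg_i e (i : 'I_H) (y : traj k H) :
  \sum_(x | agree i.+1 x y) Post e i.+1 x = 1.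
Proof. apply: (marg _ (n := (H - i.+1)%N)) => //; have := ltn_ord i; lia. Qed.

Lemma A_indep (i : 'I_H) l (e e' : policy k H Act)
  (he : forall l (j : 'I_H), (j < i)%N -> e (l, j) = e' (l, j)) :
  \sum_(x : traj k H | x i == l) traj_prob p e x =
  \sum_(x : traj k H | x i == l) traj_prob p e' x.
Proof.
transitivity (\sum_(x : traj k H | x i == l) \sum_(x' | agree i.+1 x' x)
    traj_prob p e x * Post e' i.+1 x').
  by apply: eq_bigr => x _; rewrite -big_distrr /= marg_i mulr1.
rewrite (exchange_big_dep (fun x' : traj k H => x' i == l)) /=; last first.
  by move=> x x' /eqP hx /agreeP ha; rewrite ha //= hx.
apply: eq_bigr => x' hx'.
transitivity (\sum_(x | agree i.+1 x x') traj_prob p e' x' * Post e i.+1 x).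
  apply: eq_big => x.
    apply/andP/idP => [[_ h]|h]; first by rewrite agree_sym.
    split; last by rewrite agree_sym.
    by move/agreeP: h => h; rewrite h.
  case/andP => _ ha; rewrite !(traj_split _ i) (@Pre_agree e e' i x x' he).
    by rewrite mulrAC.
  by rewrite agree_sym.
by rewrite -big_distrr /= marg_i mulr1.
Qed.

Lemma onestep e (i i1 : 'I_H) (hi1 : val i1 = (val i).+1) l s (z : traj k H) :
  z i = l ->
  \sum_(x' | agree i.+1 x' z && (x' i1 == s)) Post e i.+1 x' = p i l (e (l, i)) s.
Proof.
move=> hz.
transitivity (\sum_(x' | agree i.+2 x' (updt z i1 s)) p i l (e (l, i)) s * Post e i.+2 x').
  apply: eq_big => x'; first by rewrite agree_upd.
  case/andP => /agreeP ha /eqP hs.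
  rewrite (post_split e x' (j0 := i)) // (T_val e x' (j1 := i1)) //.
  by rewrite ha //= hz hs.
rewrite -big_distrr /= (marg _ (n := (H - i.+2)%N)) ?mulr1 //.
move: hi1 => /= hi1; have := ltn_ord i1; lia.
Qed.

Lemma Bsum e (i i1 : 'I_H) (hi1 : val i1 = (val i).+1) l s :
  \sum_(x : traj k H | (x i == l) && (x i1 == s)) traj_prob p e x =
  p i l (e (l, i)) s * \sum_(x : traj k H | x i == l) traj_prob p e x.
Proof.
rewrite big_distrr /=; symmetry.
transitivity (\sum_(x : traj k H | x i == l) \sum_(x' | agree i.+1 x' x && (x' i1 == s))
    traj_prob p e x * Post e i.+1 x').
  by apply: eq_bigr => x /eqP hx; rewrite -big_distrr /= (onestep e hi1 s hx) mulrC.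
rewrite (exchange_big_dep (fun x' : traj k H => (x' i == l) && (x' i1 == s))) /=; last first.
  by move=> x x' /eqP hx /andP [/agreeP ha hs]; rewrite hs ha //= hx eqxx.
apply: eq_bigr => x' /andP [hx'l hx's].
transitivity (\sum_(x | agree i.+1 x x') traj_prob p e x' * Post e i.+1 x).
  apply: eq_big => x.
    apply/andP/idP => [[_ /andP [h _]]|h]; first by rewrite agree_sym.
    split; last by rewrite agree_sym h hx's.
    by move/agreeP: h => h; rewrite h.
  case/andP => _ /andP [ha _]; rewrite !(traj_split _ i) (@Pre_agree e e i x x' (fun _ _ _ => erefl)).
    by rewrite mulrAC.
  by rewrite agree_sym.
by rewrite -big_distrr /= marg_i mulr1.
Qed.

Definition updp (e : policy k H Act) (st0 : 'I_k * 'I_H) b : policy k H Act :=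
  [ffun st => if st == st0 then b else e st].

Lemma updp_updp (e : policy k H Act) st0 a b : updp (updp e st0 b) st0 a = updp e st0 a.
Proof. by apply/ffunP => st; rewrite !ffunE; case: eqP. Qed.
Lemma updp_id (e : policy k H Act) st0 a : e st0 = a -> updp e st0 a = e.
Proof. by move=> h; apply/ffunP => st; rewrite !ffunE; case: eqP => // ->. Qed.
Lemma updp_at (e : policy k H Act) st0 a : updp e st0 a st0 = a.
Proof. by rewrite ffunE eqxx. Qed.
Lemma updp_eq (e : policy k H Act) st0 a : (updp e st0 a == e) = (e st0 == a).
Proof.
apply/eqP/eqP => [<-|h]; first by rewrite updp_at.
exact: updp_id.
Qed.

Lemma eta_upd (Aset : 'I_k -> 'I_H -> {set Act}) st0 (e : policy k H Act) a :
  e st0 \in Aset st0.1 st0.2 -> a \in Aset st0.1 st0.2 ->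
  eta_prob R Aset (updp e st0 a) = eta_prob R Aset e.
Proof.
move=> he ha; rewrite /eta_prob (bigD1 st0) //= [RHS](bigD1 st0) //= !ffunE eqxx ha he.
by congr (_ * _); apply: eq_bigr => st hst; rewrite ffunE (negbTE hst).
Qed.

Lemma eta_zero (Aset : 'I_k -> 'I_H -> {set Act}) st0 (e : policy k H Act) :
  e st0 \notin Aset st0.1 st0.2 -> eta_prob R Aset e = 0.
Proof. by move=> he; rewrite /eta_prob (bigD1 st0) //= (negbTE he) !mul0r. Qed.

Lemma eta_ge0 (Aset : 'I_k -> 'I_H -> {set Act}) (e : policy k H Act) : 0 <= eta_prob R Aset e.
Proof. by apply: prodr_ge0 => st _; apply: divr_ge0; apply: ler0n. Qed.

Lemma traj_ge0 (e : policy k H Act) (x : traj k H) : 0 <= traj_prob p e x.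
Proof.
apply: mulr_ge0; first by apply: prodr_ge0 => j _; apply: ler0n.
by apply: prodr_ge0 => j _; apply: prodr_ge0 => j' _; apply: p_ge0.
Qed.

End Aux.

Unset Implicit Arguments.

Theorem lemma1 (R : realFieldType) (k H : nat) (Act : finType)
  (p : nat -> 'I_k -> Act -> 'I_k -> R)
  (p_ge0 : forall i l a s, 0 <= p i l a s)
  (p_sum1 : forall i l a, \sum_(s : 'I_k) p i l a s = 1)
  (Aset : 'I_k -> 'I_H -> {set Act})
  (Aset_nonempty : forall l i, Aset l i != set0)
  (i i1 : 'I_H) (hi1 : val i1 = (val i).+1) (l s : 'I_k) :
  forall a, a \in Aset l i ->
    visit_prob p Aset l i / #|Act|%:R * p i l a s <= visit_prob p Aset s i1.
Proof.
move=> a ha.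
pose A (e : policy k H Act) := \sum_(x : traj k H | x i == l) traj_prob p e x.
pose S := \sum_(e : policy k H Act | e (l, i) == a) eta_prob R Aset e * A e.
have A_ge0 : forall e, 0 <= A e.
  by move=> e; apply: sumr_ge0 => x _; apply: (traj_ge0 p_ge0).
have S_ge0 : 0 <= S.
  by apply: sumr_ge0 => e _; apply: mulr_ge0; [apply: eta_ge0|apply: A_ge0].
have hQ : visit_prob p Aset l i <= #|Act|%:R * S.
  rewrite /visit_prob (partition_big (fun e : policy k H Act => e (l, i)) predT) //=.
  have -> : #|Act|%:R * S = \sum_(b : Act) S by rewrite sumr_const mulr_natl.
  apply: ler_sum => b _.
  case hb: (b \in Aset l i); last first.
    rewrite big1 // => e /eqP he.
    by rewrite (@eta_zero R k H Act Aset (l, i) e) ?mul0r //= he hb.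
  have upd_agree : forall (e : policy k H Act) c l' (j : 'I_H), (j < i)%N ->
      updp e (l, i) c (l', j) = e (l', j).
    move=> e c l' j hj; rewrite ffunE; case: eqP => // [[_ hji]].
    by rewrite hji ltnn in hj.
  have -> : \sum_(e : policy k H Act | e (l, i) == b) eta_prob R Aset e * A e =
            \sum_(e : policy k H Act | e (l, i) == b) eta_prob R Aset (updp e (l, i) a) * A (updp e (l, i) a).
    apply: eq_bigr => e /eqP he.
    rewrite (@eta_upd R k H Act Aset (l, i) e a) //= ?he //.
    by congr (_ * _); rewrite /A (A_indep p_sum1 l (upd_agree e a)).
  rewrite (reindex_onto (fun e : policy k H Act => updp e (l, i) b) (fun e : policy k H Act => updp e (l, i) a)) /=; last first.
    by move=> e /eqP he; rewrite updp_updp updp_id.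
  rewrite /S; rewrite le_eqVlt; apply/orP; left; apply/eqP; apply: eq_big => e; first by rewrite updp_at eqxx updp_updp updp_eq.
  by rewrite !updp_updp updp_eq => /andP [_ /eqP he]; rewrite updp_id.
have hB : p i l a s * S <= visit_prob p Aset s i1.
  rewrite /visit_prob /S big_distrr /= big_mkcond /=.
  apply: ler_sum => e _.
  have h1 : eta_prob R Aset e * \sum_(x : traj k H | (x i == l) && (x i1 == s)) traj_prob p e x
         <= eta_prob R Aset e * \sum_(x : traj k H | x i1 == s) traj_prob p e x.
    apply: ler_wpM2l; first exact: eta_ge0.
    rewrite [X in _ <= X](bigID (fun x : traj k H => x i == l)) /=.
    rewrite (eq_bigl (fun x : traj k H => (x i == l) && (x i1 == s))); last by move=> x; rewrite andbC.
    by rewrite lerDl; apply: sumr_ge0 => x _; apply: (traj_ge0 p_ge0).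
  apply: le_trans h1.
  rewrite (Bsum p_sum1 e hi1 l s).
  case: eqP => [->|_].
    by rewrite mulrCA.
  by apply: mulr_ge0; [apply: eta_ge0|apply: mulr_ge0; [apply: p_ge0|apply: A_ge0]].
have hAct : 0 < #|Act|%:R :> R by rewrite ltr0n; apply/card_gt0P; exists a.
apply: le_trans hB; rewrite [X in _ <= X]mulrC.
apply: ler_wpM2r; first exact: p_ge0.
by rewrite ler_pdivrMr // mulrC.
Qed.
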